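(* Let $\Phi\colon\mathbb X\rightrightarrows\mathbb Y$ have closed graph, $(\bar x,\bar y)\in\operatorname{gph}\Phi$, $u\in\mathbb S_{\mathbb X}$, $\gamma>1$, and assume $\ker D^*_\gamma\Phi((\bar x,\bar y);(u,0))=\{0\}$. If for all $\alpha,\beta\ge0$ \[\widetilde D^*_\gamma\Phi((\bar x,\bar y);(u,0))(0)\cup\bigcup_{v\in\mathbb S_{\mathbb Y}}D^*_\gamma\Phi((\bar x,\bar y);(u,\alpha v))(\beta v)\subset\operatorname{Im}D^*\Phi(\bar x,\bar y),\] in particular if $\operatorname{Im}\widetilde D^*_\gamma\Phi((\bar x,\bar y);(u,0))\subset\operatorname{Im}D^*\Phi(\bar x,\bar y)$, then $\Phi$ is asymptotically regular at $(\bar x,\bar y)$ in direction $u$.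
   Context: $\widehat D^*,D^*$ regular and limiting coderivatives; $\ker\Psi=\{y^*\mid0\in\Psi(y^* )\}$, $\operatorname{Im}\Psi=\bigcup_{y^*}\Psi(y^* )$. Pseudo-coderivative of order $\gamma$ in direction $(u,v)\in\mathbb S_{\mathbb X}\times\mathbb Y$: $x^*\in D^*_\gamma\Phi((\bar x,\bar y);(u,v))(y^* )$ iff there are $u_k\to u$, $v_k\to v$, $x_k^*\to x^*$, $y_k^*\to y^*$, $t_k\searrow0$ with $(t_k\|u_k\|)^{\gamma-1}x_k^*\in\widehat D^*\Phi(\bar x+t_ku_k,\bar y+(t_k\|u_k\|)^\gamma v_k)(y_k^* )$. Gfrerer's pseudo-coderivative $\widetilde D^*_\gamma\Phi((\bar x,\bar y);(u,v))$: same with $\bar y+t_kv_k$ instead. Asymptotic regularity in direction $u$: for all $\{(x_k,y_k)\}\subset\operatorname{gph}\Phi$, $\{x_k^*\}$, $\{\lambda_k\}$, $x^*,y^*$ with $x_k\notin\Phi^{-1}(\bar y)$, $y_k\ne\bar y$, $x_k^*\in\widehat D^*\Phi(x_k,y_k)(\lambda_k)$, $x_k\to\bar x$, $y_k\to\bar y$, $x_k^*\to x^*$, $(x_k-\bar x)/\|x_k-\bar x\|\to u$, $(y_k-\bar y)/\|x_k-\bar x\|\to0$, $\|\lambda_k\|\to\infty$, $(y_k-\bar y)/\|y_k-\bar y\|-\lambda_k/\|\lambda_k\|\to0$, $(\|y_k-\bar y\|/\|x_k-\bar x\|)\lambda_k\to y^*$, one has $x^*\in\operatorname{Im}D^*\Phi(\bar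 x,\bar y)$. *)

(* Defs.v *)
(* X = 'rV[R]_n, Y = 'rV[R]_m (Euclidean spaces), R : realType. *)
From HB Require Import structures.
From mathcomp Require Import all_boot all_order all_algebra.
From mathcomp Require Import all_classical all_reals all_analysis.
Set Implicit Arguments. Unset Strict Implicit. Unset Printing Implicit Defensive.
Import Order.TTheory GRing.Theory Num.Theory.
Import numFieldNormedType.Exports.
Local Open Scope classical_set_scope.
Local Open Scope ring_scope.

Section Defs.
Variable R : realType.

Definition dotv (n : nat) (a b : 'rV[R]_n) : R := \sum_(i < n) a 0 i * b 0 i.
Definition enorm (n : nat) (a : 'rV[R]_n) : R := Num.sqrt (dotv a a).

(* set-valued maps X ⇉ Y are given by their graph relation: Phi x y <-> y ∈ Phi(x) *)
Definition closed_graph (n m : nat) (Phi : 'rV[R]_n -> 'rV[R]_m -> Prop) : Prop :=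
  closed ([set p | Phi p.1 p.2] : set ('rV[R]_n * 'rV[R]_m)%type).

(* regular (Frechet) coderivative: reg_coderiv Phi x y ys xs iff (xs,-ys) is a regular
   normal to gph Phi at (x,y), with (x,y) in gph Phi *)
Definition reg_coderiv (n m : nat) (Phi : 'rV[R]_n -> 'rV[R]_m -> Prop)
  (x : 'rV[R]_n) (y : 'rV[R]_m) (ys : 'rV[R]_m) (xs : 'rV[R]_n) : Prop :=
  Phi x y /\
  forall e : R, 0 < e -> exists2 d : R, 0 < d &
    forall (x' : 'rV[R]_n) (y' : 'rV[R]_m), Phi x' y' ->
      Num.sqrt (enorm (x' - x) ^+ 2 + enorm (y' - y) ^+ 2) < d ->
      dotv xs (x' - x) - dotv ys (y' - y)
        <= e * Num.sqrt (enorm (x' - x) ^+ 2 + enorm (y' - y) ^+ 2).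

Definition lim_coderiv (n m : nat) (Phi : 'rV[R]_n -> 'rV[R]_m -> Prop)
  (xb : 'rV[R]_n) (yb : 'rV[R]_m) (ys : 'rV[R]_m) (xs : 'rV[R]_n) : Prop :=
  exists (xk : nat -> 'rV[R]_n) (yk : nat -> 'rV[R]_m)
         (xsk : nat -> 'rV[R]_n) (ysk : nat -> 'rV[R]_m),
    [/\ xk @ \oo --> xb, yk @ \oo --> yb, xsk @ \oo --> xs, ysk @ \oo --> ys &
        forall k, reg_coderiv Phi (xk k) (yk k) (ysk k) (xsk k)].

Definition Im_coderiv (n m : nat) (Psi : 'rV[R]_m -> 'rV[R]_n -> Prop) (xs : 'rV[R]_n) : Prop :=
  exists ys, Psi ys xs.

Definition ker_coderiv (n m : nat) (Psi : 'rV[R]_m -> 'rV[R]_n -> Prop) (ys : 'rV[R]_m) : Prop :=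
  Psi ys 0.

Definition pseudo_coderiv (n m : nat) (gamma : R) (Phi : 'rV[R]_n -> 'rV[R]_m -> Prop)
  (xb : 'rV[R]_n) (yb : 'rV[R]_m) (u : 'rV[R]_n) (v : 'rV[R]_m)
  (ys : 'rV[R]_m) (xs : 'rV[R]_n) : Prop :=
  exists (uk : nat -> 'rV[R]_n) (vk : nat -> 'rV[R]_m)
         (xsk : nat -> 'rV[R]_n) (ysk : nat -> 'rV[R]_m) (tk : nat -> R),
    [/\ uk @ \oo --> u, vk @ \oo --> v, xsk @ \oo --> xs, ysk @ \oo --> ys &
        tk @ \oo --> (0 : R)] /\ (forall k, 0 < tk k) /\
        forall k, reg_coderiv Phi (xb + tk k *: uk k)
                    (yb + ((tk k * enorm (uk k)) `^ gamma) *: vk k) (ysk k)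
                    (((tk k * enorm (uk k)) `^ (gamma - 1)) *: xsk k).

Definition G_pseudo_coderiv (n m : nat) (gamma : R) (Phi : 'rV[R]_n -> 'rV[R]_m -> Prop)
  (xb : 'rV[R]_n) (yb : 'rV[R]_m) (u : 'rV[R]_n) (v : 'rV[R]_m)
  (ys : 'rV[R]_m) (xs : 'rV[R]_n) : Prop :=
  exists (uk : nat -> 'rV[R]_n) (vk : nat -> 'rV[R]_m)
         (xsk : nat -> 'rV[R]_n) (ysk : nat -> 'rV[R]_m) (tk : nat -> R),
    [/\ uk @ \oo --> u, vk @ \oo --> v, xsk @ \oo --> xs, ysk @ \oo --> ys &
        tk @ \oo --> (0 : R)] /\ (forall k, 0 < tk k) /\
        forall k, reg_coderiv Phi (xb + tk k *: uk k) (yb + tk k *: vk k) (ysk k)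
                    (((tk k * enorm (uk k)) `^ (gamma - 1)) *: xsk k).

Definition asymp_regular (n m : nat) (Phi : 'rV[R]_n -> 'rV[R]_m -> Prop)
  (xb : 'rV[R]_n) (yb : 'rV[R]_m) (u : 'rV[R]_n) : Prop :=
  forall (xk : nat -> 'rV[R]_n) (yk : nat -> 'rV[R]_m) (xsk : nat -> 'rV[R]_n)
         (lam : nat -> 'rV[R]_m) (xs : 'rV[R]_n) (ys : 'rV[R]_m),
    (forall k, Phi (xk k) (yk k)) ->
    (forall k, ~ Phi (xk k) yb) ->
    (forall k, yk k <> yb) ->
    (forall k, reg_coderiv Phi (xk k) (yk k) (lam k) (xsk k)) ->
    xk @ \oo --> xb ->
    yk @ \oo --> yb ->
    xsk @ \oo --> xs ->
    (fun k => (enorm (xk k - xb))^-1 *: (xk k - xb)) @ \oo --> u ->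
    (fun k => (enorm (xk k - xb))^-1 *: (yk k - yb)) @ \oo --> (0 : 'rV[R]_m) ->
    (fun k => enorm (lam k)) @ \oo --> +oo ->
    (fun k => (enorm (yk k - yb))^-1 *: (yk k - yb) - (enorm (lam k))^-1 *: lam k)
       @ \oo --> (0 : 'rV[R]_m) ->
    (fun k => (enorm (yk k - yb) / enorm (xk k - xb)) *: lam k) @ \oo --> ys ->
    Im_coderiv (lim_coderiv Phi xb yb) xs.

End Defs.

(* Main.v *)
Require Import Defs.
From HB Require Import structures.
From mathcomp Require Import all_boot all_order all_algebra.
From mathcomp Require Import all_classical all_reals all_analysis.
From mathcomp Require Import ring lra.
Set Implicit Arguments. Unset Strict Implicit. Unset Printing Implicit Defensive.
Import Order.TTheory GRing.Theory Num.Theory.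
Import numFieldNormedType.Exports.
Local Open Scope classical_set_scope.
Local Open Scope ring_scope.

Section Enorm.
Variable R : realType.

Lemma dotvZl n (c : R) (a b : 'rV[R]_n) : dotv (c *: a) b = c * dotv a b.
Proof. by rewrite /dotv mulr_sumr; apply: eq_bigr => i _; rewrite mxE mulrA. Qed.

Lemma dotvv_ge0 n (a : 'rV[R]_n) : 0 <= dotv a a.
Proof. by apply: sumr_ge0 => i _; rewrite -expr2 sqr_ge0. Qed.

Lemma enorm_ge0 n (a : 'rV[R]_n) : 0 <= enorm a.
Proof. exact: sqrtr_ge0. Qed.

Lemma enormZ n (c : R) (a : 'rV[R]_n) : enorm (c *: a) = `|c| * enorm a.
Proof.
rewrite /enorm dotvZl /dotv.
under [X in c * X]eq_bigr do rewrite mxE mulrCA.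
rewrite -mulr_sumr mulrA -expr2 sqrtrM ?sqr_ge0 // sqrtr_sqr //.
Qed.

Lemma enorm0 n : enorm (0 : 'rV[R]_n) = 0.
Proof. by rewrite -(scale0r (0 : 'rV[R]_n)) enormZ normr0 mul0r. Qed.

Lemma coord_le_enorm n (a : 'rV[R]_n) (j : 'I_n) : `|a 0 j| <= enorm a.
Proof.
rewrite /enorm -sqrtr_sqr ler_sqrt; last exact: dotvv_ge0.
rewrite /dotv (bigD1 j) //= expr2 lerDl.
by apply: sumr_ge0 => i _; rewrite -expr2 sqr_ge0.
Qed.

Lemma normr_le_enorm n (a : 'rV[R]_n) : `|a| <= enorm a.
Proof.
rewrite [leLHS]/Num.Def.normr /= mx_normrE; apply: bigmax_le; first exact: enorm_ge0.
by move=> [i j] _ /=; rewrite (ord1 i); exact: coord_le_enorm.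
Qed.

Lemma coord_le_normr n (a : 'rV[R]_n) (j : 'I_n) : `|a 0 j| <= `|a|.
Proof.
by rewrite [leRHS]/Num.Def.normr /= mx_normrE; apply/bigmax_geP; right => /=; exists (0, j).
Qed.

Lemma enorm_le n (a : 'rV[R]_n) : enorm a <= Num.sqrt n%:R * `|a|.
Proof.
rewrite -(@ger0_norm _ `|a|) // -sqrtr_sqr -sqrtrM // ler_sqrt; last first.
  by apply: mulr_ge0 => //; rewrite sqr_ge0.
rewrite mulr_natl /dotv -[n in _ *+ n]card_ord -sumr_const; apply: ler_sum => i _.
rewrite -expr2 -real_normK ?num_real //; apply: lerXn2r; rewrite ?nnegrE //.
by rewrite ?normr_id coord_le_normr.
Qed.

Lemma enorm_eq0 n (a : 'rV[R]_n) : enorm a = 0 -> a = 0.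
Proof.
move=> /eqP; rewrite /enorm sqrtr_eq0 => h.
have h0 : dotv a a = 0 by apply/eqP; rewrite eq_le h dotvv_ge0.
apply/rowP => j; rewrite mxE; apply/eqP; rewrite -normr_le0.
by apply: le_trans (coord_le_enorm a j) _; rewrite /enorm h0 sqrtr0.
Qed.

End Enorm.

Section Cvg.
Variable R : realType.

Lemma cvg_sum_seq (I : Type)
  (s : seq I) (f : nat -> I -> R) (l : I -> R) :
  (forall i, f ^~ i @ \oo --> l i) ->
  (fun x => \sum_(i <- s) f x i) @ \oo --> \sum_(i <- s) l i.
Proof.
move=> h; elim: s => [|i s ih].
  rewrite big_nil; under eq_fun do rewrite big_nil; exact: cvg_cst.
rewrite big_cons; under eq_fun do rewrite big_cons.
exact: cvgD.
Qed.

Lemma enorm_cvg n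
  (z : nat -> 'rV[R]_n) (L : 'rV[R]_n) :
  z @ \oo --> L -> (fun x => enorm (z x)) @ \oo --> enorm L.
Proof.
move=> zL.
have cz : forall i, (fun x => z x 0 i) @ \oo --> L 0 i.
  move=> i; have := continuous_cvg _ (@coord_continuous R 1 n 0 i L) zL.
  by move/(_ _).
have hd : (fun x => dotv (z x) (z x)) @ \oo --> dotv L L.
  by apply: cvg_sum_seq => i; apply: cvgM; exact: cz.
rewrite /enorm; exact: (continuous_cvg _ (@sqrt_continuous R _) hd).
Qed.

Lemma enorm_cvg0 n
  (z : nat -> 'rV[R]_n) :
  (fun x => enorm (z x)) @ \oo --> (0:R) -> z @ \oo --> (0 : 'rV[R]_n).
Proof.
move=> /cvgr0Pnorm_lt h; apply/cvgr0Pnorm_lt => e e0.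
near=> x; apply: le_lt_trans (normr_le_enorm _) _.
rewrite -[enorm _]ger0_norm ?enorm_ge0 //; near: x; exact: h.
Unshelve. all: by end_near.
Qed.

Lemma cvg_neq (U : Type) (f g : nat -> U) (L : set_system U) :
  (\forall x \near \oo, f x = g x) -> g @ \oo --> L -> f @ \oo --> L.
Proof.
move=> e h; apply: cvg_trans h; apply: near_eq_cvg; apply: filterS e => x ->. by [].
Qed.

Lemma subseq_cvg (T : Type) (z : nat -> T) (L : set_system T) (f : nat -> nat) :
  increasing_seq f -> z @ \oo --> L -> (z \o f) @ \oo --> L.
Proof.
move=> fi zL; apply: cvg_comp zL => P [N _ HP]; exists N => // k /= Nk.
apply: HP => /=; apply: leq_trans Nk _.
elim: k => // k ih; apply: leq_ltn_trans ih _.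
by have := (increasing_seqP f).2 fi k.
Qed.

End Cvg.

Section Coder.
Variable R : realType.

Lemma reg_coderiv_scale n m (Phi : 'rV[R]_n -> 'rV[R]_m -> Prop) x y ys xs (c : R) :
  0 <= c -> reg_coderiv Phi x y ys xs -> reg_coderiv Phi x y (c *: ys) (c *: xs).
Proof.
move=> c0 [Pxy h]; split => // e e0.
have [->|cn0] := eqVneq c 0.
  exists 1 => // x' y' _ _; rewrite !dotvZl !mul0r subr0; apply: mulr_ge0; [exact: ltW|exact: sqrtr_ge0].
have cp : 0 < c by rewrite lt_neqAle eq_sym cn0.
have [d d0 hd] := h (e / c) (divr_gt0 e0 cp).
exists d => // x' y' Pxy' hxy; rewrite !dotvZl -mulrBr.
have := hd x' y' Pxy' hxy; rewrite -(ler_pM2l cp) => /le_trans; apply.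
by rewrite mulrA mulrCA mulfV ?mulr1.
Qed.

End Coder.

Section Subseq.
Variable R : realType.

Lemma io_subseq (P : nat -> Prop) :
  (forall N, exists k, (N <= k)%N /\ P k) ->
  exists2 f : nat -> nat, increasing_seq f & forall k, P (f k).
Proof.
move=> H.
pose nxt N := sval (cid (H N.+1)).
have nxtP N : (N < nxt N)%N /\ P (nxt N) by rewrite /nxt; case: cid.
pose f k := iter k nxt (nxt 0).
exists f.
  by apply/increasing_seqP => k; rewrite /f iterS; exact: (nxtP _).1.
by case=> [|k]; rewrite /f ?iterS; exact: (nxtP _).2.
Qed.

Lemma bw_rV n (z : nat -> 'rV[R]_n) (M : R) :
  (forall k, `|z k| <= M) ->
  exists2 f : nat -> nat, increasing_seq f & exists L : 'rV[R]_n, (z \o f) @ \oo --> L.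
Proof.
move=> zM.
pose A := closed_ball_ Num.Def.normr (0 : 'rV[R]_n) M.
have Acl : closed A by exact: closed_closed_ball_.
have Ab : bounded_set A.
  exists M; split; first exact: num_real.
  move=> M' MM' v; rewrite /A /closed_ball_ /= sub0r normrN => vM.
  by apply: le_trans vM (ltW MM').
have Acp := bounded_closed_compact Ab Acl.
have FA : (z @ \oo) A.
  by exists 0%N => // k _; rewrite /A /closed_ball_ /= sub0r normrN.
have [L [AL clL]] := Acp _ _ FA.
pose d k := `|L - z k|.
have cd : cluster (d @ \oo) 0.
  apply/cluster_eventuallyP => e N e0.
  have FN : (z @ \oo) [set v | exists p, (N <= p)%N /\ v = z p].
    by exists N => // p /= Np; exists p.
  have [_ [[p [Np ->]] /= hp]] := clL _ _ FN (nbhsx_ballx L e e0).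
  exists p => //; rewrite sub0r normrN /d ger0_norm //.
  by apply: ltW; move: hp; rewrite -ball_normE /ball_.
have [f fi df] := (cluster_eventually_cvg d 0).1 cd.
exists f => //; exists L; apply/cvgrPdist_lt => e e0.
move/cvgrPdist_lt : df => /(_ e e0); apply: filterS => k /=.
by rewrite sub0r normrN /d normr_id.
Qed.

End Subseq.

Unset Implicit Arguments.

Section Core.
Variable R : realType.
Variables (n m : nat) (Phi : 'rV[R]_n -> 'rV[R]_m -> Prop) (xb : 'rV[R]_n)
  (yb : 'rV[R]_m) (u : 'rV[R]_n) (gamma : R).
Hypotheses (Pb : Phi xb yb) (g1 : 1 < gamma).
Variables (xk : nat -> 'rV[R]_n) (yk : nat -> 'rV[R]_m) (xsk : nat -> 'rV[R]_n)
  (lam : nat -> 'rV[R]_m) (xs : 'rV[R]_n) (ys : 'rV[R]_m).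
Hypotheses (HnP : forall k, ~ Phi (xk k) yb) (Hy : forall k, yk k <> yb)
  (Hreg : forall k, reg_coderiv Phi (xk k) (yk k) (lam k) (xsk k))
  (Hx : xk @ \oo --> xb) (Hxs : xsk @ \oo --> xs)
  (Hu : (fun k => (enorm (xk k - xb))^-1 *: (xk k - xb)) @ \oo --> u)
  (Hw : (fun k => (enorm (xk k - xb))^-1 *: (yk k - yb)) @ \oo --> (0 : 'rV[R]_m))
  (Hl : (fun k => enorm (lam k)) @ \oo --> +oo)
  (Hdir : (fun k => (enorm (yk k - yb))^-1 *: (yk k - yb) - (enorm (lam k))^-1 *: lam k)
       @ \oo --> (0 : 'rV[R]_m))
  (Hys : (fun k => (enorm (yk k - yb) / enorm (xk k - xb)) *: lam k) @ \oo --> ys).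

Let t k := enorm (xk k - xb).
Let r k := enorm (yk k - yb).
Let c k := t k `^ (gamma - 1).
Let s k := c k * enorm (lam k).
Let uk k := (t k)^-1 *: (xk k - xb).

Lemma t_gt0 k : 0 < t k.
Proof.
rewrite lt_neqAle enorm_ge0 andbT eq_sym; apply/eqP => /enorm_eq0 /eqP.
by rewrite subr_eq0 => /eqP e; apply: (HnP k); rewrite e.
Qed.

Lemma r_gt0 k : 0 < r k.
Proof.
rewrite lt_neqAle enorm_ge0 andbT eq_sym; apply/eqP => /enorm_eq0 /eqP.
by rewrite subr_eq0 => /eqP e; apply: (Hy k).
Qed.

Lemma c_gt0 k : 0 < c k.
Proof. exact: powR_gt0 (t_gt0 k). Qed.

Lemma uk_norm k : enorm (uk k) = 1.
Proof. by rewrite enormZ ger0_norm ?invr_ge0 ?ltW ?t_gt0 // mulVf // gt_eqF ?t_gt0. Qed.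

Lemma uk_pt k : xb + t k *: uk k = xk k.
Proof. by rewrite scalerA mulfV ?gt_eqF ?t_gt0 // scale1r addrC subrK. Qed.

Lemma tpow k : (t k * enorm (uk k)) `^ (gamma - 1) = c k.
Proof. by rewrite uk_norm mulr1. Qed.

Lemma tpowg k : (t k * enorm (uk k)) `^ gamma = t k * c k.
Proof.
rewrite uk_norm mulr1 mulr_powRB1 //; first exact: ltW (t_gt0 k).
by apply: lt_trans g1.
Qed.

Lemma t_cvg : t @ \oo --> (0 : R).
Proof.
have : (fun k => xk k - xb) @ \oo --> (0 : 'rV[R]_n).
  by rewrite -(subrr xb); apply: cvgB => //; exact: cvg_cst.
by move/enorm_cvg; rewrite enorm0.
Qed.


Lemma incr_comp (f g : nat -> nat) : increasing_seq f -> increasing_seq g ->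
  increasing_seq (f \o g).
Proof. by move=> fi gi a b /=; rewrite fi; exact: gi. Qed.

Lemma G_constr (g : nat -> nat) (y' : 'rV[R]_m) : increasing_seq g ->
  (fun k => c (g k) *: lam (g k)) @ \oo --> y' ->
  G_pseudo_coderiv gamma Phi xb yb u 0 y' xs.
Proof.
move=> gi hy.
exists (uk \o g), (fun k => (t (g k))^-1 *: (yk (g k) - yb)), (xsk \o g),
  (fun k => c (g k) *: lam (g k)), (t \o g).
split; [split|split].
- exact: (subseq_cvg gi Hu).
- exact: (subseq_cvg gi Hw).
- exact: (subseq_cvg gi Hxs).
- exact: hy.
- exact: (subseq_cvg gi t_cvg).
- by move=> k; exact: t_gt0.
- move=> k /=; rewrite tpow uk_pt scalerA mulfV ?gt_eqF ?t_gt0 // scale1r addrC subrK.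
  apply: reg_coderiv_scale; [exact: ltW (c_gt0 _) | exact: Hreg].
Qed.


Lemma s_enorm k : s k = enorm (c k *: lam k).
Proof. by rewrite enormZ ger0_norm // ltW // c_gt0. Qed.

Lemma a_cvg (g : nat -> nat) : increasing_seq g ->
  (fun k => r (g k) / t (g k) * enorm (lam (g k))) @ \oo --> enorm ys.
Proof.
move=> gi; have h := enorm_cvg (subseq_cvg gi Hys).
apply: (cvg_neq _ h); near=> k => /=.
rewrite enormZ ger0_norm //; apply: divr_ge0; [exact: enorm_ge0|exact: enorm_ge0].
Unshelve. all: by end_near.
Qed.

Lemma lam_pos (g : nat -> nat) : increasing_seq g ->
  \forall k \near \oo, 0 < enorm (lam (g k)).
Proof.
move=> gi; have := subseq_cvg gi Hl; move/cvgryPge => /(_ 1).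
by apply: filterS => k /=; apply: lt_le_trans ltr01.
Qed.


Lemma P_constr (g : nat -> nat) (y' : 'rV[R]_m) : increasing_seq g ->
  (fun k => c (g k) *: lam (g k)) @ \oo --> y' -> y' != 0 ->
  exists alpha beta (v : 'rV[R]_m), [/\ 0 <= alpha, 0 <= beta, enorm v = 1 &
    pseudo_coderiv gamma Phi xb yb u (alpha *: v) (beta *: v) xs].
Proof.
move=> gi hy y0.
have ey : 0 < enorm y'.
  rewrite lt_neqAle enorm_ge0 andbT eq_sym; apply: contra y0 => /eqP /enorm_eq0 ->.
  by [].
have hs : (fun k => s (g k)) @ \oo --> enorm y'.
  have h := enorm_cvg hy; apply: (cvg_neq _ h); near=> k; by rewrite s_enorm.
have ha := a_cvg g gi.
have hd := subseq_cvg gi Hdir.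
pose e k := (r k)^-1 *: (yk k - yb).
have hse : (fun k => s (g k) *: e (g k)) @ \oo --> y'.
  have h2 : (fun k => c (g k) *: lam (g k) +
      s (g k) *: (e (g k) - (enorm (lam (g k)))^-1 *: lam (g k))) @ \oo --> y'.
    rewrite -[y' in _ --> y']addr0 -(scaler0 _ (enorm y')).
    apply: cvgD => //; apply: cvgZ => //; exact: hd.
  apply: (cvg_neq _ h2); near=> k.
  have lk : 0 < enorm (lam (g k)) by near: k; exact: lam_pos g gi.
  have E : s (g k) *: ((enorm (lam (g k)))^-1 *: lam (g k)) = c (g k) *: lam (g k).
    by rewrite scalerA /s mulfK ?gt_eqF.
  by rewrite scalerBr E addrC subrK.
have h3 : (fun k => (r (g k) / t (g k) * enorm (lam (g k)) * (s (g k) * s (g k))^-1)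
     *: (s (g k) *: e (g k))) @ \oo --> (enorm ys * (enorm y' * enorm y')^-1) *: y'.
  apply: cvgZ => //; apply: cvgM => //; apply: cvgV.
    by rewrite mulf_neq0 // gt_eqF.
  exact: cvgM.
exists (enorm ys / enorm y'), (enorm y'), ((enorm y')^-1 *: y'); split.
- by apply: divr_ge0; exact: enorm_ge0.
- exact: enorm_ge0.
- by rewrite enormZ ger0_norm ?invr_ge0 ?enorm_ge0 // mulVf // gt_eqF.
exists (uk \o g), (fun k => (t (g k) * c (g k))^-1 *: (yk (g k) - yb)), (xsk \o g),
  (fun k => c (g k) *: lam (g k)), (t \o g).
split; [split|split].
- exact: (subseq_cvg gi Hu).
- have -> : (enorm ys / enorm y') *: ((enorm y')^-1 *: y') =
     (enorm ys * (enorm y' * enorm y')^-1) *: y' by rewrite scalerA invfM mulrA.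
  apply: (cvg_neq _ h3); near=> k.
  have lk : 0 < enorm (lam (g k)) by near: k; exact: lam_pos g gi.
  have tk := t_gt0 (g k); have ck := c_gt0 (g k); have rk := r_gt0 (g k).
  rewrite /e !scalerA /s; congr (_ *: _).
  field; rewrite ?gt_eqF //.
- exact: (subseq_cvg gi Hxs).
- by rewrite scalerA mulfV ?gt_eqF // scale1r.
- exact: (subseq_cvg gi t_cvg).
- by move=> k; exact: t_gt0.
- move=> k /=; rewrite tpow tpowg uk_pt scalerA mulfV; last first.
    by rewrite mulf_neq0 // gt_eqF ?t_gt0 ?c_gt0.
  rewrite scale1r addrC subrK.
  apply: reg_coderiv_scale; [exact: ltW (c_gt0 _) | exact: Hreg].
Unshelve. all: by end_near.
Qed.


Lemma caseB :
  (forall y : 'rV[R]_m, ker_coderiv (pseudo_coderiv gamma Phi xb yb u 0) y <-> y = 0) ->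
  s @ \oo --> +oo -> False.
Proof.
move=> Hker hs.
pose w k := (enorm (lam k))^-1 *: lam k.
have wb k : `|w k| <= 1.
  apply: le_trans (normr_le_enorm _) _.
  rewrite enormZ ger0_norm ?invr_ge0 ?enorm_ge0 //.
  have [e0|ne] := eqVneq (enorm (lam k)) 0; first by rewrite e0 mulr0 ler01.
  by rewrite mulVf.
have [g gi [w' hw']] := bw_rV wb.
have ew : enorm w' = 1.
  have h1 := enorm_cvg hw'.
  have h2 : (fun k => enorm ((w \o g) k)) @ \oo --> (1:R).
    apply: (@cvg_neq _ _ (fun=> (1:R))); last exact: cvg_cst. near=> k.
    have lk : 0 < enorm (lam (g k)) by near: k; exact: lam_pos g gi.
    by rewrite /= enormZ ger0_norm ?invr_ge0 ?enorm_ge0 // mulVf // gt_eqF.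
  move: h1 h2; apply: norm_cvg_unique.
suff : w' = 0 by move=> w0; move: ew; rewrite w0 enorm0 => /eqP; rewrite eq_sym oner_eq0.
apply/Hker.
have hsg := subseq_cvg gi hs.
have sinv : (fun k => (s (g k))^-1) @ \oo --> (0:R).
  apply/gtr0_cvgV0; last exact: hsg.
  near=> k; have lk : 0 < enorm (lam (g k)) by near: k; exact: lam_pos g gi.
  by rewrite /s mulr_gt0 // c_gt0.
exists (uk \o g), (fun k => (t (g k) * c (g k))^-1 *: (yk (g k) - yb)),
  (fun k => (s (g k))^-1 *: xsk (g k)), (w \o g), (t \o g).
split; [split|split].
- exact: (subseq_cvg gi Hu).
- apply: enorm_cvg0.
  have ha := a_cvg g gi.
  have h3 : (fun k => r (g k) / t (g k) * enorm (lam (g k)) * (s (g k))^-1) @ \oo --> (0:R).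
    by rewrite -(mulr0 (enorm ys)); apply: cvgM.
  apply: (cvg_neq _ h3); near=> k.
  have lk : 0 < enorm (lam (g k)) by near: k; exact: lam_pos g gi.
  have tk := t_gt0 (g k); have ck := c_gt0 (g k); have rk := r_gt0 (g k).
  rewrite enormZ ger0_norm; last by rewrite invr_ge0 mulr_ge0 // ltW.
  rewrite /s -/(r (g k)); field; rewrite ?gt_eqF //.
- by rewrite -(scale0r xs); apply: cvgZ => //; exact: (subseq_cvg gi Hxs).
- exact: hw'.
- exact: (subseq_cvg gi t_cvg).
- by move=> k; exact: t_gt0.
- move=> k /=; rewrite tpow tpowg uk_pt scalerA mulfV; last first.
    by rewrite mulf_neq0 // gt_eqF ?t_gt0 ?c_gt0.
  rewrite scale1r addrC subrK scalerA /s invfM mulrA mulfV ?gt_eqF ?c_gt0 // mul1r.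
  apply: reg_coderiv_scale; [by rewrite invr_ge0 enorm_ge0 | exact: Hreg].
Unshelve. all: by end_near.
Qed.


Lemma core :
  (forall y : 'rV[R]_m, ker_coderiv (pseudo_coderiv gamma Phi xb yb u 0) y <-> y = 0) ->
  exists y' : 'rV[R]_m, G_pseudo_coderiv gamma Phi xb yb u 0 y' xs /\
    (y' = 0 \/ exists alpha beta (v : 'rV[R]_m), [/\ 0 <= alpha, 0 <= beta, enorm v = 1 &
    pseudo_coderiv gamma Phi xb yb u (alpha *: v) (beta *: v) xs]).
Proof.
move=> Hker.
case: (pselect (exists M, forall N, exists k, (N <= k)%N /\ s k <= M)) => [[M HM]|nM].
- have [f fi fM] := io_subseq HM.
  pose z k := c (f k) *: lam (f k).
  have zb k : `|z k| <= M.
    by apply: le_trans (normr_le_enorm _) _; rewrite /z -s_enorm; exact: fM.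
  have [h hi [y' hy]] := bw_rV zb.
  have gi := incr_comp f h fi hi.
  have hy' : (fun k => c ((f \o h) k) *: lam ((f \o h) k)) @ \oo --> y' := hy.
  exists y'; split; first exact: G_constr (f \o h) y' gi hy'.
  by have [->|y0] := eqVneq y' 0; [left | right; exact: P_constr (f \o h) y' gi hy' y0].
- exfalso; apply: (caseB Hker); apply/cvgryPge => A.
  have : ~ forall N, exists k, (N <= k)%N /\ s k <= A by move=> H; apply: nM; exists A.
  move=> /existsNP [N] /forallNP HN; exists N => // k /= Nk.
  apply: ltW; rewrite ltNge; apply/negP => sA; apply: (HN k); by split.
Qed.

End Core.

Unset Implicit Arguments.

Theorem mainTheorem10 (R : realType) (n m : nat)
  (Phi : 'rV[R]_n -> 'rV[R]_m -> Prop) (xb : 'rV[R]_n) (yb : 'rV[R]_m)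
  (u : 'rV[R]_n) (gamma : R) :
  closed_graph Phi ->
  Phi xb yb ->
  enorm u = 1 ->
  1 < gamma ->
  (forall ys : 'rV[R]_m,
     ker_coderiv (pseudo_coderiv gamma Phi xb yb u 0) ys <-> ys = 0) ->
  ((forall alpha beta : R, 0 <= alpha -> 0 <= beta ->
      forall xs : 'rV[R]_n,
        (G_pseudo_coderiv gamma Phi xb yb u 0 0 xs \/
         exists2 v : 'rV[R]_m, enorm v = 1 &
           pseudo_coderiv gamma Phi xb yb u (alpha *: v) (beta *: v) xs) ->
        Im_coderiv (lim_coderiv Phi xb yb) xs) ->
    asymp_regular Phi xb yb u)
  /\
  ((forall xs : 'rV[R]_n,
      Im_coderiv (G_pseudo_coderiv gamma Phi xb yb u 0) xs ->
      Im_coderiv (lim_coderiv Phi xb yb) xs) ->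
    asymp_regular Phi xb yb u).
Proof.
move=> _ Pb _ g1 Hker; split.
- move=> H1 xk yk xsk lam xs ys _ HnP Hy Hreg Hx _ Hxs Hu Hw Hl Hdir Hys.
  have [y' [HG [y0|[al [be [v [a0 b0 v1 hp]]]]]]] := core R n m Phi xb yb u gamma Pb g1
    xk yk xsk lam xs ys HnP Hy Hreg Hx Hxs Hu Hw Hl Hdir Hys Hker.
  + by apply: (H1 0 0 (lexx 0) (lexx 0)); left; move: HG; rewrite y0.
  + by apply: (H1 al be a0 b0); right; exists v.
- move=> H2 xk yk xsk lam xs ys _ HnP Hy Hreg Hx _ Hxs Hu Hw Hl Hdir Hys.
  have [y' [HG _]] := core R n m Phi xb yb u gamma Pb g1
    xk yk xsk lam xs ys HnP Hy Hreg Hx Hxs Hu Hw Hl Hdir Hys Hker.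
  by apply: H2; exists y'.
Qed.
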